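(* Let $f$ be as in the setting below and satisfy condition (i), and let $0<s\le 1$. Then for every set $A\subset[0,1)$, \[ M^s_\infty(A)\ge \frac{1}{2g_fK_f}N^s_\infty(A). \]
   Context: Setting: $f\colon[0,1)\to[0,1)$ and $g_f\ge 2$ is an integer such that $[0,1)$ is partitioned into $g_f$ half-open intervals $[a,b)$, enumerated as $[0],\dots,[g_f-1]$, such that on each of them $f$ is monotone and maps onto $[0,1)$, and $|f(x)-f(y)|\ge |x-y|$ for all $x,y$ in the same interval. For a word $x_1\dots x_n$ over $\{0,\dots,g_f-1\}$ the generation-$n$ cylinder is $C_{x_1\dots x_n}=\{x\in[0,1): f^{i-1}(x)\in[x_i],\ i=1,\dots,n\}$; $[0,1)$ is the generation-$0$ cylinder. It is assumed that $|C_{x_1\dots x_n}|\to 0$ as $n\to\infty$ for every $(x_i)\in\{0,\dots,g_f-1\}^{\mathbb N}$. Condition (i) (bounded distortion): there is $K_f>0$ such that for every cylinder $C_{x_1\dots x_n}$ (including $[0,1)$), $|(f^n)'(y)|/|(f^n)'(z)|<K_f$ for all $y,z\in C_{x_1\dots x_n}$; this implies $|C_{x_1\dots x_{n+1}}|/|C_{x_1\dots x_n}|>1/(g_fK_f)$ for all sequences and all $n$. Outer measures: $M^s_\infty(F)=\inf\{\sum_i|I_i|^s: F\subset\bigcup_i I_i\}$, the infimum over countable covers by dyadic intervals $I_i=[2^kj,2^k(j+1))$, $k,j\in\mathbb Z$; $N^s_\infty(F)=\inf\{\sum_i |C_i|^s: F\subset\bigcup_i C_i\}$, the infimum over countable covers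 by cylinders of $f$. *)

(* Defs.v *)
From Stdlib Require Import Reals Lra List ZArith Classical ClassicalEpsilon.
Open Scope R_scope.

(* Supremum of a set of reals (0 if empty or unbounded above). *)
Definition Rsup (E : R -> Prop) : R :=
  match excluded_middle_informative (bound E /\ exists x, E x) with
  | left H => proj1_sig (completeness E (proj1 H) (proj2 H))
  | right _ => 0
  end.

(* Infimum of a set of reals (0 if empty or unbounded below). *)
Definition Rinf (E : R -> Prop) : R := - Rsup (fun x => E (- x)).

Definition diam (S : R -> Prop) : R :=
  Rsup (fun r => exists x y, S x /\ S y /\ r = Rabs (x - y)).

(* x^s for x > 0, and 0 for x <= 0 (only used with x >= 0). *)
Definition pw (x s : R) : R :=
  if Rlt_dec 0 x then Rpower x s else 0.

Definition branch (a : nat -> R) (k : nat) (x : R) : Prop :=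
  a k <= x < a (S k).

Definition word_ok (g : nat) (w : list nat) : Prop :=
  forall i, In i w -> (i < g)%nat.

(* Cylinder C_{x_1...x_n}: f^{i-1}(x) in [x_i] for i = 1..n. *)
Definition cyl (f : R -> R) (a : nat -> R) (w : list nat) (x : R) : Prop :=
  0 <= x < 1 /\
  forall i, (i < length w)%nat -> branch a (nth i w 0%nat) (Nat.iter i f x).

(* (f^n)'(y) computed by the chain rule from the derivative df of f. *)
Fixpoint dfn (f df : R -> R) (n : nat) (y : R) : R :=
  match n with
  | O => 1
  | S m => dfn f df m y * df (Nat.iter m f y)
  end.

Definition setting (f : R -> R) (g : nat) (a : nat -> R) : Prop :=
  (2 <= g)%nat /\
  a 0%nat = 0 /\ a g = 1 /\
  (forall k, (k < g)%nat -> a k < a (S k)) /\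
  (forall k, (k < g)%nat ->
     (forall x y, branch a k x -> branch a k y -> x <= y -> f x <= f y) \/
     (forall x y, branch a k x -> branch a k y -> x <= y -> f y <= f x)) /\
  (forall k, (k < g)%nat ->
     (forall x, branch a k x -> 0 <= f x < 1) /\
     (forall y, 0 <= y < 1 -> exists x, branch a k x /\ f x = y)) /\
  (forall k, (k < g)%nat -> forall x y, branch a k x -> branch a k y ->
     Rabs (f x - f y) >= Rabs (x - y)) /\
  (forall xs : nat -> nat, (forall i, (xs i < g)%nat) ->
     Un_cv (fun n => diam (cyl f a (map xs (seq 0 n)))) 0).

(* Condition (i) with constant K, df being the derivative of f inside the
   branches, together with its stated consequence on cylinder ratios. *)
Definition condition_i (f df : R -> R) (g : nat) (a : nat -> R) (K : R) : Prop :=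
  0 < K /\
  (forall k, (k < g)%nat -> forall x, a k < x < a (S k) ->
     derivable_pt_lim f x (df x)) /\
  (forall w, word_ok g w -> forall y z, cyl f a w y -> cyl f a w z ->
     Rabs (dfn f df (length w) y) / Rabs (dfn f df (length w) z) < K) /\
  (forall w, word_ok g w -> forall k, (k < g)%nat ->
     diam (cyl f a (w ++ k :: nil)) / diam (cyl f a w) > 1 / (INR g * K)).

Definition dyad (kj : Z * Z) (x : R) : Prop :=
  powerRZ 2 (fst kj) * IZR (snd kj) <= x < powerRZ 2 (fst kj) * (IZR (snd kj) + 1).

(* M^s_infty: countable (possibly finite: None = no interval) dyadic covers. *)
Definition Mout (s : R) (A : R -> Prop) : R :=
  Rinf (fun r => exists I : nat -> option (Z * Z),
    (forall x, A x -> exists i kj, I i = Some kj /\ dyad kj x) /\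
    infinite_sum (fun i => match I i with
                           | Some kj => pw (powerRZ 2 (fst kj)) s
                           | None => 0 end) r).

(* N^s_infty: countable (possibly finite) covers by cylinders of f. *)
Definition Nout (f : R -> R) (g : nat) (a : nat -> R) (s : R) (A : R -> Prop) : R :=
  Rinf (fun r => exists C : nat -> option (list nat),
    (forall w i, C i = Some w -> word_ok g w) /\
    (forall x, A x -> exists i w, C i = Some w /\ cyl f a w x) /\
    infinite_sum (fun i => match C i with
                           | Some w => pw (diam (cyl f a w)) s
                           | None => 0 end) r).

(* Main.v *)
Require Import Defs.
From Stdlib Require Import Reals Lra List ZArith Classical ClassicalEpsilon Lia.
Open Scope R_scope.

Lemma a_mono (g : nat) (a : nat -> R) (Ha : forall k, (k < g)%nat -> a k < a (S k)) :
  forall i j, (i <= j)%nat -> (j <= g)%nat -> a i <= a j.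
Proof.
  intros i j Hij; induction Hij as [|j Hij IH]; intros Hj.
  - lra.
  - assert (a j < a (S j)) by (apply Ha; lia). specialize (IH ltac:(lia)). lra.
Qed.

Lemma branch_uniq f g a (Hset : setting f g a) k1 k2 t :
  (k1 < g)%nat -> (k2 < g)%nat -> branch a k1 t -> branch a k2 t -> k1 = k2.
Proof.
  destruct Hset as (_ & _ & _ & Ha & _).
  unfold branch; intros H1 H2 B1 B2.
  destruct (Nat.lt_trichotomy k1 k2) as [Hl|[He|Hl]]; auto.
  - pose proof (a_mono g a Ha (S k1) k2 ltac:(lia) ltac:(lia)). lra.
  - pose proof (a_mono g a Ha (S k2) k1 ltac:(lia) ltac:(lia)). lra.
Qed.

Lemma branch_ex f g a (Hset : setting f g a) t :
  0 <= t < 1 -> exists k, (k < g)%nat /\ branch a k t.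
Proof.
  destruct Hset as (_ & a0 & ag & Ha & _).
  intros Ht.
  assert (forall n, (n <= g)%nat -> a 0%nat <= t < a n -> exists k, (k < n)%nat /\ branch a k t).
  { induction n; intros Hn Hr.
    - lra.
    - destruct (Rlt_le_dec t (a n)) as [Hlt|Hge].
      + destruct (IHn ltac:(lia) ltac:(lra)) as [k [Hk Hb]]. exists k; split; auto; lia.
      + exists n; split; [lia|]. unfold branch; lra. }
  destruct (H g ltac:(lia) ltac:(rewrite a0, ag; lra)) as [k Hk]; eauto.
Qed.

Lemma iter_in f g a (Hset : setting f g a) x :
  0 <= x < 1 -> forall i, 0 <= Nat.iter i f x < 1.
Proof.
  intros Hx i; induction i; simpl; auto.
  destruct (branch_ex f g a Hset _ IHi) as [k [Hk Hb]].
  destruct Hset as (_ & _ & _ & _ & _ & Hon & _).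
  exact (proj1 (Hon k Hk) _ Hb).
Qed.

Definition itin (f : R -> R) (g : nat) (a : nat -> R) (x : R) (i : nat) : nat :=
  epsilon (inhabits 0%nat) (fun k => (k < g)%nat /\ branch a k (Nat.iter i f x)).

Definition Wd f g a (n : nat) (x : R) : list nat := map (itin f g a x) (seq 0 n).

Lemma itin_spec f g a (Hset : setting f g a) x i :
  0 <= x < 1 -> (itin f g a x i < g)%nat /\ branch a (itin f g a x i) (Nat.iter i f x).
Proof.
  intros Hx. unfold itin. apply epsilon_spec.
  apply (branch_ex f g a Hset). apply (iter_in f g a Hset x Hx).
Qed.

Lemma length_Wd f g a n x : length (Wd f g a n x) = n.
Proof. unfold Wd. rewrite length_map, length_seq. reflexivity. Qed.

Lemma nth_Wd f g a n x i : (i < n)%nat -> nth i (Wd f g a n x) 0%nat = itin f g a x i.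
Proof.
  intros Hi. unfold Wd.
  rewrite (nth_indep (map (itin f g a x) (seq 0 n)) 0%nat (itin f g a x 0%nat)) by (rewrite length_map, length_seq; exact Hi).
  rewrite map_nth, seq_nth by exact Hi. reflexivity.
Qed.

Lemma Wd_ok f g a (Hset : setting f g a) n x : 0 <= x < 1 -> word_ok g (Wd f g a n x).
Proof.
  intros Hx i Hi. unfold Wd in Hi. apply in_map_iff in Hi. destruct Hi as [j [<- _]].
  apply (itin_spec f g a Hset x j Hx).
Qed.

Lemma cyl_Wd f g a (Hset : setting f g a) n x : 0 <= x < 1 -> cyl f a (Wd f g a n x) x.
Proof.
  intros Hx. split; auto. intros i Hi. rewrite length_Wd in Hi.
  rewrite nth_Wd by exact Hi. apply (itin_spec f g a Hset x i Hx).
Qed.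

Lemma cyl_Wd_agree f g a (Hset : setting f g a) n x z :
  0 <= x < 1 -> cyl f a (Wd f g a n x) z -> forall i, (i < n)%nat -> itin f g a z i = itin f g a x i.
Proof.
  intros Hx [Hz Hc] i Hi.
  specialize (Hc i ltac:(rewrite length_Wd; exact Hi)). rewrite nth_Wd in Hc by exact Hi.
  destruct (itin_spec f g a Hset x i Hx) as [Hlt _].
  assert (Hs : (itin f g a z i < g)%nat /\ branch a (itin f g a z i) (Nat.iter i f z)).
  { unfold itin at 1 2. apply epsilon_spec. eauto. }
  apply (branch_uniq f g a Hset _ _ (Nat.iter i f z)); tauto.
Qed.

Lemma Wd_ext f g a n x y :
  (forall i, (i < n)%nat -> itin f g a x i = itin f g a y i) -> Wd f g a n x = Wd f g a n y.
Proof.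
  intros H. unfold Wd. apply map_ext_in. intros i Hi. apply in_seq in Hi. apply H. lia.
Qed.

Lemma Wd_S f g a n x : Wd f g a (S n) x = Wd f g a n x ++ itin f g a x n :: nil.
Proof. unfold Wd. rewrite seq_S, map_app. reflexivity. Qed.

Lemma cyl_convex f g a (Hset : setting f g a) w :
  word_ok g w -> forall x y z, cyl f a w x -> cyl f a w z ->
  (x <= y <= z \/ z <= y <= x) -> cyl f a w y.
Proof.
  induction w as [|k w IH]; intros Hok x y z [Hx Cx] [Hz Cz] Hy.
  - split; [lra|]. simpl; intros; lia.
  - assert (Hk : (k < g)%nat) by (apply Hok; left; auto).
    assert (Hok' : word_ok g w) by (intros i Hi; apply Hok; right; auto).
    pose proof (Cx 0%nat ltac:(simpl; lia)) as Bx. pose proof (Cz 0%nat ltac:(simpl; lia)) as Bz.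
    simpl in Bx, Bz.
    assert (By : branch a k y) by (unfold branch in *; lra).
    destruct Hset as (Hg & a0 & ag & Ha & Hmon & Hon & Hexp & Hcv).
    assert (Cfx : cyl f a w (f x)).
    { split. apply (proj1 (Hon k Hk) _ Bx).
      intros i Hi. specialize (Cx (S i) ltac:(simpl; lia)). simpl nth in Cx.
      rewrite Nat.iter_succ_r in Cx. exact Cx. }
    assert (Cfz : cyl f a w (f z)).
    { split. apply (proj1 (Hon k Hk) _ Bz).
      intros i Hi. specialize (Cz (S i) ltac:(simpl; lia)). simpl nth in Cz.
      rewrite Nat.iter_succ_r in Cz. exact Cz. }
    assert (Hfy : f x <= f y <= f z \/ f z <= f y <= f x).
    { destruct (Hmon k Hk) as [M|M]; destruct Hy as [Hy|Hy].
      - left; split; apply M; auto; lra.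
      - right; split; apply M; auto; lra.
      - right; split; apply M; auto; lra.
      - left; split; apply M; auto; lra. }
    destruct (IH Hok' _ _ _ Cfx Cfz Hfy) as [_ Cy].
    split; [lra|]. intros [|i] Hi; simpl.
    + exact By.
    + change (branch a (nth i w 0%nat) (Nat.iter (S i) f y)). rewrite Nat.iter_succ_r. apply Cy. simpl in Hi; lia.
Qed.

Lemma least_ex (P : nat -> Prop) N : P N -> exists n, P n /\ forall k, (k < n)%nat -> ~ P k.
Proof.
  revert P. induction N as [N IH] using lt_wf_ind. intros P HN.
  destruct (classic (exists k, (k < N)%nat /\ P k)) as [[k [Hk Pk]]|Hn].
  - exact (IH k Hk P Pk).
  - exists N; split; auto. intros k Hk Pk; apply Hn; eauto.
Qed.

Definition Psmall f g a (c : R) (n : nat) (x : R) : Prop := diam (cyl f a (Wd f g a n x)) < c.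

Definition mm f g a (c : R) (x : R) : nat :=
  epsilon (inhabits 0%nat) (fun n => Psmall f g a c n x /\ forall k, (k < n)%nat -> ~ Psmall f g a c k x).

Definition W f g a c x := Wd f g a (mm f g a c x) x.

Lemma mm_spec f g a (Hset : setting f g a) c x : 0 < c -> 0 <= x < 1 ->
  Psmall f g a c (mm f g a c x) x /\ forall k, (k < mm f g a c x)%nat -> ~ Psmall f g a c k x.
Proof.
  intros Hc Hx. unfold mm. apply epsilon_spec.
  pose proof Hset as (_ & _ & _ & _ & _ & _ & _ & Hcv).
  specialize (Hcv (itin f g a x) (fun i => proj1 (itin_spec f g a Hset x i Hx))).
  destruct (Hcv c Hc) as [N HN]. specialize (HN N (le_n N)).
  unfold R_dist in HN. rewrite Rminus_0_r in HN.
  apply least_ex with N. unfold Psmall, Wd.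
  pose proof (Rle_abs (diam (cyl f a (map (itin f g a x) (seq 0 N))))). lra.
Qed.

Lemma W_partition f g a (Hset : setting f g a) c x y z : 0 < c -> 0 <= x < 1 -> 0 <= y < 1 ->
  cyl f a (W f g a c x) z -> cyl f a (W f g a c y) z -> W f g a c x = W f g a c y.
Proof.
  intros Hc Hx Hy Cx Cy. unfold W in *.
  pose proof (cyl_Wd_agree f g a Hset _ _ _ Hx Cx) as Ax.
  pose proof (cyl_Wd_agree f g a Hset _ _ _ Hy Cy) as Ay.
  destruct (mm_spec f g a Hset c x Hc Hx) as [Px Lx].
  destruct (mm_spec f g a Hset c y Hc Hy) as [Py Ly].
  set (n := mm f g a c x) in *. set (m := mm f g a c y) in *.
  destruct (Nat.lt_trichotomy n m) as [H|[H|H]].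
  - exfalso. apply (Ly n H). unfold Psmall.
    rewrite (Wd_ext f g a n y x); auto.
    intros i Hi. rewrite <- (Ay i) by lia. apply Ax; auto.
  - rewrite <- H. apply Wd_ext. intros i Hi. rewrite <- (Ax i Hi). apply Ay. lia.
  - exfalso. apply (Lx m H). unfold Psmall.
    rewrite (Wd_ext f g a m x y); auto.
    intros i Hi. rewrite <- (Ax i) by lia. apply Ay; auto.
Qed.

Lemma diam_pts (S : R -> Prop) L : 0 <= L -> diam S > L ->
  exists u v, S u /\ S v /\ Rabs (u - v) > L.
Proof.
  intros HL Hd. unfold diam, Rsup in Hd.
  destruct excluded_middle_informative as [H|H].
  - destruct (completeness _ _ _) as [sg [Hub Hlub]]. simpl in Hd.
    apply NNPP; intro Hn. assert (sg <= L).
    { apply Hlub. intros r [u [v [Su [Sv ->]]]].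
      apply Rnot_lt_le. intro Hlt. apply Hn. exists u, v; repeat split; auto. }
    lra.
  - lra.
Qed.

Lemma W_ok f g a (Hset : setting f g a) c x : 0 <= x < 1 -> word_ok g (W f g a c x).
Proof. intros; apply Wd_ok; auto. Qed.

Lemma W_cyl f g a (Hset : setting f g a) c x : 0 <= x < 1 -> cyl f a (W f g a c x) x.
Proof. intros; apply cyl_Wd; auto. Qed.

Lemma W_small f g a (Hset : setting f g a) c x : 0 < c -> 0 <= x < 1 -> diam (cyl f a (W f g a c x)) < c.
Proof. intros Hc Hx. exact (proj1 (mm_spec f g a Hset c x Hc Hx)). Qed.

Lemma W_large f g a df K (Hset : setting f g a) (Hi : condition_i f df g a K) L x :
  0 < L -> INR g * K * L <= diam (cyl f a nil) -> 0 <= x < 1 ->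
  diam (cyl f a (W f g a (INR g * K * L) x)) > L.
Proof.
  intros HL Hc Hx.
  destruct Hi as (HK & _ & _ & Hrat).
  pose proof Hset as (Hg & _).
  assert (HgK : 0 < INR g * K) by (apply Rmult_lt_0_compat; auto; apply lt_0_INR; lia).
  assert (Hc0 : 0 < INR g * K * L) by (apply Rmult_lt_0_compat; auto).
  destruct (mm_spec f g a Hset _ x Hc0 Hx) as [P L0].
  unfold W. destruct (mm f g a (INR g * K * L) x) as [|k] eqn:E.
  - unfold Psmall in P. change (diam (cyl f a nil) < INR g * K * L) in P. lra.
  - specialize (L0 k ltac:(lia)). unfold Psmall in *.
    assert (Hk : INR g * K * L <= diam (cyl f a (Wd f g a k x))) by lra.
    rewrite Wd_S in *.
    specialize (Hrat (Wd f g a k x) (Wd_ok f g a Hset k x Hx) (itin f g a x k)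
      (proj1 (itin_spec f g a Hset x k Hx))).
    set (d0 := diam (cyl f a (Wd f g a k x))) in *.
    set (d1 := diam (cyl f a (Wd f g a k x ++ itin f g a x k :: nil))) in *.
    assert (Hd0 : 0 < d0) by lra.
    assert (d1 > d0 * (1 / (INR g * K))).
    { assert (H1 : d1 / d0 * d0 > 1 / (INR g * K) * d0) by (apply Rmult_gt_compat_r; lra).
      replace (d1 / d0 * d0) with d1 in H1 by (field; lra). lra. }
    assert (d0 * (1 / (INR g * K)) >= L).
    { apply Rle_ge. apply (Rmult_le_reg_l (INR g * K)); auto.
      replace (INR g * K * (d0 * (1 / (INR g * K)))) with d0 by (field; split; [lra|]; apply not_0_INR; lia). lra. }
    lra.
Qed.

Definition ocyl f a (o : option (list nat)) (x : R) : Prop :=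
  match o with Some w => cyl f a w x | None => False end.
Definition ook g (o : option (list nat)) : Prop := forall w, o = Some w -> word_ok g w.
Definition wt f a s (o : option (list nat)) : R :=
  match o with Some w => pw (diam (cyl f a w)) s | None => 0 end.

Lemma pw_nonneg x s : 0 <= pw x s.
Proof. unfold pw. destruct Rlt_dec; [unfold Rpower; left; apply exp_pos | lra]. Qed.

Lemma pw_mono x y s : 0 <= s -> x <= y -> pw x s <= pw y s.
Proof.
  intros Hs Hxy. unfold pw at 1. destruct Rlt_dec as [Hx|Hx].
  - unfold pw. destruct Rlt_dec; [|lra]. apply Rle_Rpower_l; lra.
  - apply pw_nonneg.
Qed.

Lemma pw_scale c L s : 1 <= c -> 0 < L -> 0 < s <= 1 -> pw (c * L) s <= c * pw L s.
Proof.
  intros Hc HL Hs. unfold pw. destruct Rlt_dec as [H1|H1]; [|exfalso; nra].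
  destruct Rlt_dec as [H2|H2]; [|lra].
  rewrite <- Rpower_mult_distr by lra.
  apply Rmult_le_compat_r. unfold Rpower; left; apply exp_pos.
  rewrite <- (Rpower_1 c) at 2 by lra. apply Rle_Rpower; lra.
Qed.

Lemma K_gt1 f df g a K (Hi : condition_i f df g a K) : 1 < K.
Proof.
  destruct Hi as (_ & _ & Hd & _).
  assert (C0 : cyl f a nil 0) by (split; [lra | simpl; intros; lia]).
  specialize (Hd nil (fun i H => match H with end) 0 0 C0 C0). simpl in Hd.
  rewrite Rabs_R1 in Hd. lra.
Qed.

Lemma cover2 f df g a K (Hset : setting f g a) (Hi : condition_i f df g a K) s (Hs : 0 < s <= 1) p L :
  0 < L -> exists o1 o2, ook g o1 /\ ook g o2 /\
    (forall x, 0 <= x < 1 -> p <= x < p + L -> ocyl f a o1 x \/ ocyl f a o2 x) /\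
    wt f a s o1 <= INR g * K * pw L s /\ wt f a s o2 <= INR g * K * pw L s.
Proof.
  intros HL.
  pose proof (K_gt1 f df g a K Hi) as HK.
  pose proof Hset as (Hg & _).
  assert (Hg2 : 2 <= INR g) by (replace 2 with (INR 2) by (simpl; lra); apply le_INR; lia).
  assert (HgK : 1 <= INR g * K) by nra.
  assert (Hpos : 0 <= INR g * K * pw L s) by (pose proof (pw_nonneg L s); nra).
  set (c := INR g * K * L).
  assert (Hc : 0 < c) by (unfold c; nra).
  assert (Hwt : forall w, diam (cyl f a w) < c -> wt f a s (Some w) <= INR g * K * pw L s).
  { intros w Hw. simpl. eapply Rle_trans. apply pw_mono. lra. left; exact Hw.
    unfold c. apply pw_scale; auto. }
  destruct (classic (exists x, 0 <= x < 1 /\ p <= x < p + L)) as [[x0 Hx0]|Hn].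
  2:{ exists None, None. repeat split; try (intros w Hw; discriminate); simpl; try lra.
      intros x Hx Hx'. exfalso; eauto. }
  destruct (Rlt_le_dec (diam (cyl f a nil)) c) as [Hd|Hd].
  { exists (Some nil), None. repeat split.
    - intros w Hw; injection Hw as <-. intros i Hi'; destruct Hi'.
    - intros w Hw; discriminate.
    - intros x Hx _. left. split; auto. simpl; intros; lia.
    - apply Hwt; auto.
    - simpl; lra. }
  set (q := Rmax p 0).
  assert (Hq : 0 <= q < 1 /\ p <= q < p + L).
  { unfold q. destruct (Rle_dec p 0); [rewrite Rmax_right by lra | rewrite Rmax_left by lra]; lra. }
  assert (Hqx : forall x, 0 <= x -> p <= x -> q <= x).
  { intros x H1 H2. unfold q. apply Rmax_lub; auto. }
  assert (Far : forall z, 0 <= z < 1 -> p <= z < p + L -> ~ cyl f a (W f g a c q) z ->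
            exists t, cyl f a (W f g a c z) t /\ t > p + L).
  { intros z Hz Hz' Hnq.
    assert (Above : forall t, cyl f a (W f g a c z) t -> q <= t).
    { intros t Ct. apply Rnot_lt_le. intro Hlt.
      assert (Cq : cyl f a (W f g a c z) q).
      { apply (cyl_convex f g a Hset _ (W_ok f g a Hset c z Hz) t q z); auto.
        apply W_cyl; auto. left; split; [lra | apply Hqx; lra]. }
      assert (E : W f g a c q = W f g a c z).
      { apply (W_partition f g a Hset c q z q); try tauto. apply W_cyl; tauto. }
      apply Hnq. rewrite E. apply W_cyl; auto. }
    destruct (diam_pts (cyl f a (W f g a c z)) L) as [u [v [Cu [Cv Huv]]]]; [lra| |].
    { apply Rlt_gt, (W_large f g a df K Hset Hi L z); auto. }
    pose proof (Above u Cu). pose proof (Above v Cv).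
    destruct (Rle_dec u v).
    - exists v; split; auto. rewrite Rabs_left1 in Huv by lra. lra.
    - exists u; split; auto. rewrite Rabs_right in Huv by lra. lra. }
  destruct (classic (exists y, (0 <= y < 1 /\ p <= y < p + L) /\ ~ cyl f a (W f g a c q) y))
    as [[y [Hy Hny]]|Hn2].
  - exists (Some (W f g a c q)), (Some (W f g a c y)). repeat split.
    + intros w Hw; injection Hw as <-. apply W_ok; tauto.
    + intros w Hw; injection Hw as <-. apply W_ok; tauto.
    + intros x Hx Hx'. simpl. destruct (classic (cyl f a (W f g a c q) x)) as [Hc'|Hc']; [left; auto|right].
      destruct (Rle_dec y x).
      * destruct (Far y (proj1 Hy) (proj2 Hy) Hny) as [t [Ct Ht]].
        apply (cyl_convex f g a Hset _ (W_ok f g a Hset c y (proj1 Hy)) y x t); auto.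
        apply W_cyl; tauto. left; lra.
      * destruct (Far x Hx Hx' Hc') as [t [Ct Ht]].
        assert (Cy : cyl f a (W f g a c x) y).
        { apply (cyl_convex f g a Hset _ (W_ok f g a Hset c x Hx) x y t); auto.
          apply W_cyl; tauto. left; lra. }
        assert (E : W f g a c x = W f g a c y).
        { apply (W_partition f g a Hset c x y y); try tauto. apply W_cyl; tauto. }
        rewrite <- E. apply W_cyl; auto.
    + apply Hwt, W_small; tauto.
    + apply Hwt, W_small; tauto.
  - exists (Some (W f g a c q)), None. repeat split.
    + intros w Hw; injection Hw as <-. apply W_ok; tauto.
    + intros w Hw; discriminate.
    + intros x Hx Hx'. left. simpl. apply NNPP; intro Hn3. apply Hn2. exists x; auto.
    + apply Hwt, W_small; tauto.
    + simpl; lra.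
Qed.

Lemma par i : Nat.even (i+i) = true /\ Nat.div2 (i+i) = i /\
  Nat.even (S (i+i)) = false /\ Nat.div2 (S (i+i)) = i.
Proof.
  induction i as [|i IH]; [simpl; auto|].
  replace (S i + S i)%nat with (S (S (i + i))) by lia. destruct IH as (H1 & H2 & H3 & H4).
  assert (D : forall n, Nat.div2 (S (S n)) = S (Nat.div2 n)) by reflexivity.
  assert (Ev : forall n, Nat.even (S (S n)) = Nat.even n) by reflexivity.
  rewrite !D, !Ev, H1, H2, H3, H4. auto.
Qed.

Lemma sum_mono u : (forall n, 0 <= u n) -> forall n m, (n <= m)%nat -> sum_f_R0 u n <= sum_f_R0 u m.
Proof.
  intros Hu n m H; induction H; [lra|]. simpl. specialize (Hu (S m)). lra.
Qed.

Lemma sum_le_lim u r : (forall n, 0 <= u n) -> infinite_sum u r -> forall n, sum_f_R0 u n <= r.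
Proof.
  intros Hu Hs n. apply Rnot_lt_le. intro Hlt.
  destruct (Hs (sum_f_R0 u n - r) ltac:(lra)) as [N HN].
  specialize (HN (max n N) ltac:(lia)).
  pose proof (sum_mono u Hu n (max n N) ltac:(lia)).
  unfold Rdist in HN. rewrite Rabs_right in HN by lra. lra.
Qed.

Lemma lim_nonneg u r : (forall n, 0 <= u n) -> infinite_sum u r -> 0 <= r.
Proof. intros Hu Hs. pose proof (sum_le_lim u r Hu Hs 0). simpl in H. specialize (Hu 0%nat). lra. Qed.

Lemma lim_le_bound (U : nat -> R) l B : Un_cv U l -> (forall n, U n <= B) -> l <= B.
Proof.
  intros Hc HB. apply Rnot_lt_le. intro Hlt.
  destruct (Hc (l - B) ltac:(lra)) as [N HN]. specialize (HN N (le_n N)). specialize (HB N).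
  unfold Rdist in HN. rewrite Rabs_left1 in HN by lra. lra.
Qed.

Lemma Rinf_le (E : R -> Prop) r0 : (forall r, E r -> 0 <= r) -> E r0 -> Rinf E <= r0.
Proof.
  intros Hn H0. unfold Rinf, Rsup. destruct excluded_middle_informative as [H|H].
  - destruct (completeness _ _ _) as [sg [Hub Hlub0]]. simpl.
    assert (-r0 <= sg) by (apply Hub; rewrite Ropp_involutive; auto). lra.
  - exfalso. apply H. split.
    + exists 0. intros x Hx. specialize (Hn _ Hx). lra.
    + exists (-r0). rewrite Ropp_involutive; auto.
Qed.

Lemma Rinf_ge (E : R -> Prop) r0 b : (forall r, E r -> 0 <= r) -> E r0 ->
  (forall r, E r -> b <= r) -> b <= Rinf E.
Proof.
  intros Hn H0 Hb. unfold Rinf, Rsup. destruct excluded_middle_informative as [H|H].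
  - destruct (completeness _ _ _) as [sg [Hub0 Hlub]]. simpl.
    assert (sg <= -b). { apply Hlub. intros x Hx. specialize (Hb _ Hx). lra. } lra.
  - exfalso. apply H. split.
    + exists 0. intros x Hx. specialize (Hn _ Hx). lra.
    + exists (-r0). rewrite Ropp_involutive; auto.
Qed.

Definition dwt s (o : option (Z * Z)) : R :=
  match o with Some kj => pw (powerRZ 2 (fst kj)) s | None => 0 end.

Definition Good f g a K s (o : option (Z * Z)) (pr : option (list nat) * option (list nat)) : Prop :=
  match o with
  | None => pr = (None, None)
  | Some kj => ook g (fst pr) /\ ook g (snd pr) /\
      (forall x, 0 <= x < 1 -> dyad kj x -> ocyl f a (fst pr) x \/ ocyl f a (snd pr) x) /\
      wt f a s (fst pr) <= INR g * K * pw (powerRZ 2 (fst kj)) s /\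
      wt f a s (snd pr) <= INR g * K * pw (powerRZ 2 (fst kj)) s
  end.

Definition Fpick f g a K s (o : option (Z * Z)) :=
  epsilon (inhabits (@None (list nat), @None (list nat))) (Good f g a K s o).

Lemma Fpick_spec f df g a K (Hset : setting f g a) (Hi : condition_i f df g a K) s (Hs : 0 < s <= 1) o :
  Good f g a K s o (Fpick f g a K s o).
Proof.
  unfold Fpick. apply epsilon_spec. destruct o as [[k j]|].
  - destruct (cover2 f df g a K Hset Hi s Hs (powerRZ 2 k * IZR j) (powerRZ 2 k))
      as (o1 & o2 & H1 & H2 & H3 & H4 & H5).
    { apply powerRZ_lt; lra. }
    exists (o1, o2). simpl. repeat split; auto.
    intros x Hx [Hd1 Hd2]. apply H3; auto. simpl in *. rewrite Rmult_plus_distr_l, Rmult_1_r in Hd2. lra.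
  - exists (None, None). reflexivity.
Qed.

Lemma key f df g a K (Hset : setting f g a) (Hi : condition_i f df g a K) s (Hs : 0 < s <= 1)
  (A : R -> Prop) (HA : forall x, A x -> 0 <= x < 1) (I : nat -> option (Z * Z)) r :
  (forall x, A x -> exists i kj, I i = Some kj /\ dyad kj x) ->
  infinite_sum (fun i => match I i with Some kj => pw (powerRZ 2 (fst kj)) s | None => 0 end) r ->
  Nout f g a s A <= 2 * (INR g * K) * r.
Proof.
  intros Hcov Hsum.
  pose proof (K_gt1 f df g a K Hi) as HK.
  pose proof Hset as (Hg & _).
  assert (Hg2 : 2 <= INR g) by (replace 2 with (INR 2) by (simpl; lra); apply le_INR; lia).
  set (P := fun i => Fpick f g a K s (I i)).
  set (C := fun j => if Nat.even j then fst (P (Nat.div2 j)) else snd (P (Nat.div2 j))).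
  set (c := fun j => wt f a s (C j)).
  set (m := fun i => match I i with Some kj => pw (powerRZ 2 (fst kj)) s | None => 0 end).
  assert (Hm : forall i, 0 <= m i) by (intro i; unfold m; destruct (I i); [apply pw_nonneg|lra]).
  assert (Hcn : forall j, 0 <= c j) by (intro j; unfold c; destruct (C j); [apply pw_nonneg|simpl; lra]).
  assert (Hpair : forall i, c (i+i)%nat + c (S (i+i)) <= 2 * (INR g * K) * m i).
  { intro i. destruct (par i) as (E1 & E2 & E3 & E4).
    unfold c, C. rewrite E1, E2, E3, E4.
    pose proof (Fpick_spec f df g a K Hset Hi s Hs (I i)) as G. fold (P i) in G.
    unfold m. destruct (I i) as [kj|].
    - destruct G as (_ & _ & _ & W1 & W2). lra.
    - rewrite G. simpl. lra. }
  assert (Hps : forall n, sum_f_R0 c (S (n+n)) <= 2 * (INR g * K) * sum_f_R0 m n).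
  { induction n.
    - simpl. pose proof (Hpair 0%nat). simpl in H. lra.
    - replace (S (S n + S n)) with (S (S (S (n+n)))) by lia.
      change (sum_f_R0 c (S (S (S (n+n))))) with
        (sum_f_R0 c (S (n+n)) + c (S (S (n+n))) + c (S (S (S (n+n))))).
      pose proof (Hpair (S n)). replace (S n + S n)%nat with (S (S (n+n))) in H by lia.
      change (sum_f_R0 m (S n)) with (sum_f_R0 m n + m (S n)).
      rewrite Rmult_plus_distr_l. lra. }
  assert (Hbd : forall N, sum_f_R0 c N <= 2 * (INR g * K) * r).
  { intro N. eapply Rle_trans. apply (sum_mono c Hcn N (S (N+N))); lia.
    eapply Rle_trans. apply Hps. apply Rmult_le_compat_l. nra.
    apply (sum_le_lim m r Hm Hsum). }
  destruct (growing_cv (sum_f_R0 c)) as [r' Hr'].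
  { intro n. simpl. specialize (Hcn (S n)). lra. }
  { exists (2 * (INR g * K) * r). intros x [i ->]. apply Hbd. }
  assert (Hle : r' <= 2 * (INR g * K) * r) by (apply (lim_le_bound _ _ _ Hr' Hbd)).
  eapply Rle_trans; [|exact Hle].
  apply Rinf_le.
  - intros r0 (C0 & _ & _ & Hs0). eapply lim_nonneg; [|exact Hs0].
    intro n; simpl. destruct (C0 n); [apply pw_nonneg|lra].
  - exists C. repeat split.
    + intros w j Hj. unfold C in Hj.
      pose proof (Fpick_spec f df g a K Hset Hi s Hs (I (Nat.div2 j))) as G. fold (P (Nat.div2 j)) in G.
      destruct (I (Nat.div2 j)) as [kj|].
      * destruct G as (O1 & O2 & _).
        destruct (Nat.even j); [apply O1|apply O2]; auto.
      * simpl in G. rewrite G in Hj. destruct (Nat.even j); discriminate.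
    + intros x Hx. destruct (Hcov x Hx) as [i [kj [Hik Hd]]].
      pose proof (Fpick_spec f df g a K Hset Hi s Hs (I i)) as G. fold (P i) in G.
      rewrite Hik in G. destruct G as (_ & _ & Cv & _).
      destruct (par i) as (E1 & E2 & E3 & E4).
      destruct (Cv x (HA x Hx) Hd) as [Hc1|Hc2].
      * exists (i+i)%nat. unfold C. rewrite E1, E2.
        destruct (fst (P i)) as [w|] eqn:Ew; [|destruct Hc1]. exists w; split; auto.
      * exists (S (i+i)). unfold C. rewrite E3, E4.
        destruct (snd (P i)) as [w|] eqn:Ew; [|destruct Hc2]. exists w; split; auto.
    + exact Hr'.
Qed.

Theorem mainTheorem6 (f df : R -> R) (g : nat) (a : nat -> R) (K : R)
  (Hset : setting f g a) (Hi : condition_i f df g a K)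
  (s : R) (Hs : 0 < s <= 1) (A : R -> Prop)
  (HA : forall x, A x -> 0 <= x < 1) :
  Mout s A >= / (2 * INR g * K) * Nout f g a s A.
Proof.
  pose proof (K_gt1 f df g a K Hi) as HK.
  pose proof Hset as (Hg & _).
  assert (Hg2 : 2 <= INR g) by (replace 2 with (INR 2) by (simpl; lra); apply le_INR; lia).
  assert (HgK : 0 < 2 * INR g * K) by nra.
  apply Rle_ge. unfold Mout. apply Rinf_ge with (r0 := pw (powerRZ 2 0) s).
  - intros r0 (I0 & _ & Hs0). eapply lim_nonneg; [|exact Hs0].
    intro n; simpl. destruct (I0 n); [apply pw_nonneg|lra].
  - exists (fun i => match i with O => Some (0%Z, 0%Z) | S _ => None end). split.
    + intros x Hx. exists 0%nat, (0%Z, 0%Z). split; auto. unfold dyad; simpl.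
      specialize (HA x Hx). lra.
    + intros eps Heps. exists 0%nat. intros n _.
      assert (sum_f_R0 (fun i => match (match i with O => Some (0%Z, 0%Z) | S _ => None end) with
                  | Some kj => pw (powerRZ 2 (fst kj)) s | None => 0 end) n = pw (powerRZ 2 0) s).
      { induction n; simpl; auto. rewrite IHn. simpl. lra. }
      rewrite H. unfold Rdist. rewrite Rminus_diag, Rabs_R0. lra.
  - intros r (I0 & Hc0 & Hs0).
    pose proof (key f df g a K Hset Hi s Hs A HA I0 r Hc0 Hs0).
    apply (Rmult_le_reg_l (2 * INR g * K)); auto.
    rewrite <- Rmult_assoc, Rinv_r, Rmult_1_l by lra. lra.
Qed.
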